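(* Let $n\ge1$, $m\ge 2$, let $\rho_1$ be an $n$-qubit density matrix at time $t_1$, and for each $\alpha=1,\dots,m-1$ let $\mathcal{M}_{\alpha+1|\alpha}$ be a CPTP map on $n$ qubits applied between times $t_\alpha$ and $t_{\alpha+1}$, with Choi–Jamiołkowski matrix $M_{\alpha,\alpha+1}:=\sum_{i,j=0}^{2^n-1}(|i\rangle\langle j|)^T\otimes\mathcal{M}_{\alpha+1|\alpha}(|i\rangle\langle j|)$ acting on $H_\alpha\otimes H_{\alpha+1}$. For $2\le k\le m$ let $R_{12\dots k}$ denote the $k$-time $n$-qubit pseudo-density matrix (defined in the context) of the process restricted to times $t_1,\dots,t_k$. Then $R_{12}=\tfrac12(\rho M_{12}+M_{12}\rho)$ with $\rho=\rho_1\otimes\mathbb{1}_2$, and for every $3\le k\le m$, $$R_{12\dots k}=\tfrac12\big(R_{12\dots k-1}M_{k-1,k}+M_{k-1,k}R_{12\dots k-1}\big),$$ where $R_{12\dots k-1}$ is understood as $R_{12\dots k-1}\otimes\mathbb{1}_k$ and $M_{k-1,k}$ as $\mathbb{1}_{1\cdots k-2}\otimes M_{k-1,k}$ on $H_1\otimes\cdots\otimes H_k$.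
   Context: Each $H_\alpha\cong(\mathbb{C}^2)^{\otimes n}$ is the Hilbert space of the $n$ qubits at time $t_\alpha$. Pauli matrices $\sigma_0=\mathbb{1},\sigma_1,\sigma_2,\sigma_3$; $n$-qubit Pauli matrices are $\tilde\sigma_i\in\{\sigma_0,\dots,\sigma_3\}^{\otimes n}$, $i=0,\dots,4^n-1$. The coarse-grained measurement of $\tilde\sigma_i$ at time $t_\alpha$ is the projective measurement $\{P^\alpha_\pm=(\mathbb{1}\pm\tilde\sigma_i)/2\}$ with outcomes $\pm1$ and Lüders update $\rho\mapsto P^\alpha_\pm\rho P^\alpha_\pm$. For indices $(i_1,\dots,i_k)$ the experiment is: prepare $\rho_1$; at each time $t_\alpha$ ($\alpha=1,\dots,k$) perform the coarse-grained measurement of $\tilde\sigma_{i_\alpha}$, and between $t_\alpha$ and $t_{\alpha+1}$ apply $\mathcal{M}_{\alpha+1|\alpha}$ to the post-measurement state. $\langle\tilde\sigma_{i_1},\dots,\tilde\sigma_{i_k}\rangle$ is the expectation of the product of the $k$ outcomes. The $k$-time pseudo-density matrix is $$R_{12\dots k}=\frac{1}{2^{kn}}\sum_{i_1,\dots,i_k=0}^{4^n-1}\langle\tilde\sigma_{i_1},\dots,\tilde\sigma_{i_k}\rangle\,\tilde\sigma_{i_1}\otimes\cdots\otimes\tilde\sigma_{i_k}.$$ *)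

(* Defs.v *)
(* Complex scalars: an arbitrary numClosedFieldType C
   (e.g. algC, or complex R for R a real closed field).
   Kronecker product: mathcomp-real-closed's [mxtens] ([A *t B], first factor
   is the major index, i.e. the usual |i> (x) |j> = |i*p+j> convention). *)
From HB Require Import structures.
From mathcomp Require Import all_boot all_order all_algebra.
From mathcomp Require Import mxtens.
Set Implicit Arguments. Unset Strict Implicit. Unset Printing Implicit Defensive.
Import Order.TTheory GRing.Theory Num.Theory.
Local Open Scope ring_scope.

Section QM.
Variable C : numClosedFieldType.

Definition adjmx (p q : nat) (A : 'M[C]_(p, q)) : 'M[C]_(q, p) :=
  (map_mx (fun z : C => z^*) A)^T.

Definition psd (p : nat) (A : 'M[C]_p) : Prop :=
  forall v : 'cV[C]_p, 0 <= (adjmx v *m A *m v) 0 0.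

Definition density (p : nat) (rho : 'M[C]_p) : Prop :=
  psd rho /\ \tr rho = 1.

Definition lin_map (p : nat) (f : 'M[C]_p -> 'M[C]_p) : Prop :=
  forall (a : C) (A B : 'M[C]_p), f (a *: A + B) = a *: f A + f B.

Definition trace_preserving (p : nat) (f : 'M[C]_p -> 'M[C]_p) : Prop :=
  forall A : 'M[C]_p, \tr (f A) = \tr A.

(* block (a,b) of X, seen as an element of M_q(M_p) *)
Definition mxblock_at (q p : nat) (a b : 'I_q) (X : 'M[C]_(q * p)) : 'M[C]_p :=
  \matrix_(i, j) X (mxtens_index (a, i)) (mxtens_index (b, j)).

(* id_q (x) f *)
Definition ampliate (q p : nat) (f : 'M[C]_p -> 'M[C]_p) (X : 'M[C]_(q * p))
  : 'M[C]_(q * p) :=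
  \sum_(a < q) \sum_(b < q) (delta_mx a b *t f (mxblock_at a b X)).

Definition completely_positive (p : nat) (f : 'M[C]_p -> 'M[C]_p) : Prop :=
  forall (q : nat) (X : 'M[C]_(q * p)), psd X -> psd (ampliate f X).

Definition cptp (p : nat) (f : 'M[C]_p -> 'M[C]_p) : Prop :=
  [/\ lin_map f, completely_positive f & trace_preserving f].

Definition choi (p : nat) (f : 'M[C]_p -> 'M[C]_p) : 'M[C]_(p * p) :=
  \sum_(i < p) \sum_(j < p) ((delta_mx i j)^T *t f (delta_mx i j)).

Definition pauli (a : 'I_4) : 'M[C]_2 :=
  \matrix_(i < 2, j < 2)
    if (a == 0 :> nat) then (i == j)%:R
    else if (a == 1 :> nat) then (i != j)%:R
    else if (a == 2 :> nat) then
      (if (i == 0 :> nat) && (j == 1 :> nat) then - 'i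
       else if (i == 1 :> nat) && (j == 0 :> nat) then 'i else 0)
    else (if i == j then (if i == 0 :> nat then 1 else -1) else 0).

Fixpoint tensf (d k : nat) : ('I_k -> 'M[C]_d) -> 'M[C]_(d ^ k) :=
  match k return ('I_k -> 'M[C]_d) -> 'M[C]_(d ^ k) with
  | 0 => fun _ => 1%:M
  | k'.+1 => fun A =>
      castmx (esym (expnS d k'), esym (expnS d k'))
             (A ord0 *t tensf (fun i : 'I_k' => A (lift ord0 i)))
  end.

Definition pauli_str (n : nat) (s : {ffun 'I_n -> 'I_4}) : 'M[C]_(2 ^ n) :=
  tensf (fun q => pauli (s q)).

Definition sgn (b : bool) : C := if b then 1 else -1.

Definition proj (p : nat) (sigma : 'M[C]_p) (b : bool) : 'M[C]_p :=
  2^-1 *: (1%:M + sgn b *: sigma).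

(* Unnormalised state after the k measurements with outcomes s, in the
   process: prepare rho; at time a (0-based) measure obs a (Lueders update),
   between times a and a+1 apply E a. *)
Definition final_state (p k : nat) (rho : 'M[C]_p) (E : nat -> 'M[C]_p -> 'M[C]_p)
  (obs : 'I_k -> 'M[C]_p) (s : {ffun 'I_k -> bool}) : 'M[C]_p :=
  foldl (fun X (a : 'I_k) =>
           let P := proj (obs a) (s a) in
           P *m (if (a == 0 :> nat) then X else E a.-1 X) *m P)
        rho (enum 'I_k).

(* < sigma_{i_1}, ..., sigma_{i_k} > : expectation of the product of outcomes *)
Definition corr (n k : nat) (rho : 'M[C]_(2 ^ n))
  (E : nat -> 'M[C]_(2 ^ n) -> 'M[C]_(2 ^ n))
  (idx : {ffun 'I_k -> {ffun 'I_n -> 'I_4}}) : C :=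
  \sum_(s : {ffun 'I_k -> bool})
     (\prod_(a < k) sgn (s a)) *
     \tr (final_state rho E (fun a => pauli_str (idx a)) s).

Definition pdm (n k : nat) (rho : 'M[C]_(2 ^ n))
  (E : nat -> 'M[C]_(2 ^ n) -> 'M[C]_(2 ^ n)) : 'M[C]_((2 ^ n) ^ k) :=
  ((2 ^ (k * n))%:R)^-1 *:
    \sum_(idx : {ffun 'I_k -> {ffun 'I_n -> 'I_4}})
       corr rho E idx *: tensf (fun a => pauli_str (idx a)).

Lemma expn_sq (d : nat) : (d * d)%N = (d ^ 2)%N.
Proof. by rewrite !expnS expn0 muln1. Qed.

Lemma expn_2S (d k : nat) : (d ^ k * (d * d))%N = (d ^ k.+2)%N.
Proof. by rewrite !expnSr mulnA. Qed.

Definition ext_right (d k : nat) (R : 'M[C]_(d ^ k)) : 'M[C]_(d ^ k.+1) :=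
  castmx (esym (expnSr d k), esym (expnSr d k)) (R *t (1%:M : 'M[C]_d)).

Definition ext_left (d k : nat) (M : 'M[C]_(d * d)) : 'M[C]_(d ^ k.+2) :=
  castmx (expn_2S d k, expn_2S d k) ((1%:M : 'M[C]_(d ^ k)) *t M).

End QM.

(* Main.v *)
Require Import Defs.
From HB Require Import structures.
From mathcomp Require Import all_boot all_order all_algebra.
From mathcomp Require Import mxtens.
From mathcomp Require Import ring zify.
Import Order.TTheory GRing.Theory Num.Theory.
Local Open Scope ring_scope.

Module Helpers.
Set Implicit Arguments. Unset Strict Implicit. Unset Printing Implicit Defensive.


Section Aux.
Variable C : numClosedFieldType.

Lemma lin0 p (f : 'M[C]_p -> 'M[C]_p) : lin_map f -> f 0 = 0.
Proof.
move=> Hf; have h := Hf 1 0 0; rewrite !scale1r addr0 in h.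
by apply: (addrI (f 0)); rewrite addr0 -h.
Qed.

Lemma linD p (f : 'M[C]_p -> 'M[C]_p) : lin_map f -> forall A B, f (A + B) = f A + f B.
Proof. by move=> Hf A B; have := Hf 1 A B; rewrite !scale1r. Qed.

Lemma linZ p (f : 'M[C]_p -> 'M[C]_p) : lin_map f -> forall c A, f (c *: A) = c *: f A.
Proof. by move=> Hf c A; rewrite -[c *: A]addr0 Hf lin0 // addr0. Qed.

Lemma lin_sum p q (f : 'M[C]_p -> 'M[C]_q)
  (Hf : forall c A B, f (c *: A + B) = c *: f A + f B)
  (I : finType) (c : I -> C) (A : I -> 'M[C]_p) :
  f (\sum_i c i *: A i) = \sum_i c i *: f (A i).
Proof.
have f0 : f 0 = 0.
  have h := Hf 1 0 0; rewrite !scale1r addr0 in h.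
  by apply: (addrI (f 0)); rewrite addr0 -h.
elim/big_rec2: _ => [|i x y _ <-]; first by [].
by rewrite Hf.
Qed.

Lemma linS p (f : 'M[C]_p -> 'M[C]_p) : lin_map f ->
  forall (I : finType) (A : I -> 'M[C]_p), f (\sum_i A i) = \sum_i f (A i).
Proof.
move=> Hf I A; have := lin_sum Hf (fun=> 1) A.
by under eq_bigr do rewrite scale1r; under [RHS]eq_bigr do rewrite scale1r.
Qed.

Lemma castmx_irr m m' n n' (e1 e2 : m = m') (f1 f2 : n = n') (A : 'M[C]_(m, n)) :
  castmx (e1, f1) A = castmx (e2, f2) A.
Proof. by rewrite (eq_irrelevance e1 e2) (eq_irrelevance f1 f2). Qed.

Lemma castmxD m m' n n' (e : (m = m') * (n = n')) (A B : 'M[C]_(m, n)) :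
  castmx e (A + B) = castmx e A + castmx e B.
Proof. by case: e => e1 e2; case: m' / e1; case: n' / e2. Qed.

Lemma castmxZ m m' n n' (e : (m = m') * (n = n')) c (A : 'M[C]_(m, n)) :
  castmx e (c *: A) = c *: castmx e A.
Proof. by case: e => e1 e2; case: m' / e1; case: n' / e2. Qed.

Lemma castmx_sum m m' n n' (e : (m = m') * (n = n')) (I : finType) (A : I -> 'M[C]_(m, n)) :
  castmx e (\sum_i A i) = \sum_i castmx e (A i).
Proof. by case: e => e1 e2; case: m' / e1; case: n' / e2; rewrite castmx_id; apply: eq_bigr => i _; rewrite castmx_id. Qed.

Lemma castmx_mulmx m m' (e : m = m') (A B : 'M[C]_m) :
  castmx (e, e) (A *m B) = castmx (e, e) A *m castmx (e, e) B.
Proof. by case: m' / e. Qed.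

Lemma castmx1 m m' (e : m = m') : castmx (e, e) (1%:M : 'M[C]_m) = 1%:M.
Proof. by case: m' / e. Qed.

Lemma tensmx_castr m n p q p' q' (e1 : p = p') (e2 : q = q')
  (A : 'M[C]_(m, n)) (B : 'M[C]_(p, q)) :
  A *t castmx (e1, e2) B = castmx (f_equal (muln m) e1, f_equal (muln n) e2) (A *t B).
Proof. by case: p' / e1; case: q' / e2. Qed.

Lemma tensmx_castl m n p q m' n' (e1 : m = m') (e2 : n = n')
  (A : 'M[C]_(m, n)) (B : 'M[C]_(p, q)) :
  castmx (e1, e2) A *t B = castmx (f_equal (muln^~ p) e1, f_equal (muln^~ q) e2) (A *t B).
Proof. by case: m' / e1; case: n' / e2. Qed.

Lemma tensmxA m1 n1 m2 n2 m3 n3 (A : 'M[C]_(m1, n1)) (B : 'M[C]_(m2, n2)) (D : 'M[C]_(m3, n3)) :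
  (A *t B) *t D = castmx (mulnA m1 m2 m3, mulnA n1 n2 n3) (A *t (B *t D)).
Proof.
apply/matrixP => i j.
case: (mxtens_indexP i) => i12 i3; case: (mxtens_indexP i12) => i1 i2.
case: (mxtens_indexP j) => j12 j3; case: (mxtens_indexP j12) => j1 j2.
rewrite castmxE !tensmxE.
have -> : cast_ord (esym (mulnA m1 m2 m3)) (mxtens_index (mxtens_index (i1, i2), i3))
   = mxtens_index (i1, mxtens_index (i2, i3)).
  by apply: val_inj => /=; rewrite mulnDl -mulnA addnA.
have -> : cast_ord (esym (mulnA n1 n2 n3)) (mxtens_index (mxtens_index (j1, j2), j3))
   = mxtens_index (j1, mxtens_index (j2, j3)).
  by apply: val_inj => /=; rewrite mulnDl -mulnA addnA.
by rewrite !tensmxE mulrA.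
Qed.

Lemma tens11 m n : (1%:M : 'M[C]_m) *t (1%:M : 'M[C]_n) = 1%:M.
Proof.
apply/matrixP => i j.
case: (mxtens_indexP i) => i1 i2; case: (mxtens_indexP j) => j1 j2.
rewrite tensmxE !mxE -natrM mulnb; congr (_ %:R).
by rewrite (inj_eq (can_inj (@mxtens_indexK _ _))) xpair_eqE.
Qed.

Lemma tensmxDr m n p q (A : 'M[C]_(m, n)) (B D : 'M[C]_(p, q)) :
  A *t (B + D) = A *t B + A *t D.
Proof. by apply/matrixP => i j; rewrite !mxE mulrDr. Qed.

Lemma tensmxZr m n p q (A : 'M[C]_(m, n)) c (B : 'M[C]_(p, q)) :
  A *t (c *: B) = c *: (A *t B).
Proof. by apply/matrixP => i j; rewrite !mxE mulrCA. Qed.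

Lemma tensmxZl m n p q (A : 'M[C]_(m, n)) c (B : 'M[C]_(p, q)) :
  (c *: A) *t B = c *: (A *t B).
Proof. by apply/matrixP => i j; rewrite !mxE mulrA. Qed.

Lemma tensmx_sumr m n p q (A : 'M[C]_(m, n)) (I : finType) (B : I -> 'M[C]_(p, q)) :
  A *t (\sum_i B i) = \sum_i A *t B i.
Proof. by apply/matrixP => i j; rewrite !mxE !summxE mulr_sumr; apply: eq_bigr => k _; rewrite mxE. Qed.

Lemma tensmx_suml m n p q (I : finType) (A : I -> 'M[C]_(m, n)) (B : 'M[C]_(p, q)) :
  (\sum_i A i) *t B = \sum_i A i *t B.
Proof. by apply/matrixP => i j; rewrite !mxE !summxE mulr_suml; apply: eq_bigr => k _; rewrite mxE. Qed.

Lemma index_cast N m n (e : N = (m * n)%N) (a : 'I_N) :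
  exists a1 a2, a = cast_ord (esym e) (mxtens_index (a1, a2)).
Proof.
exists (mxtens_unindex (cast_ord e a)).1, (mxtens_unindex (cast_ord e a)).2.
by rewrite -surjective_pairing mxtens_unindexK cast_ordK.
Qed.

End Aux.


Section B.
Variable C : numClosedFieldType.

Definition cons_ffun (T : finType) (k : nat) (x : T) (g : {ffun 'I_k -> T}) : {ffun 'I_k.+1 -> T} :=
  [ffun i => if unlift ord0 i is Some j then g j else x].

Lemma cons_ffun0 (T : finType) (k : nat) (x : T) (g : {ffun 'I_k -> T}) : cons_ffun x g ord0 = x.
Proof. by rewrite ffunE unlift_none. Qed.

Lemma cons_ffunS (T : finType) k (x : T) (g : {ffun 'I_k -> T}) j : cons_ffun x g (lift ord0 j) = g j.
Proof. by rewrite ffunE liftK. Qed.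

Lemma big_ffunS (V : nmodType) (T : finType) k (F : {ffun 'I_k.+1 -> T} -> V) :
  \sum_f F f = \sum_(x : T) \sum_(g : {ffun 'I_k -> T}) F (cons_ffun x g).
Proof.
rewrite pair_big /=.
rewrite (reindex (fun p : T * {ffun 'I_k -> T} => cons_ffun p.1 p.2)) //=.
exists (fun f : {ffun 'I_k.+1 -> T} => (f ord0, [ffun j => f (lift ord0 j)])).
  move=> [x g] _ /=; rewrite cons_ffun0; congr (_, _).
  by apply/ffunP => j; rewrite ffunE cons_ffunS.
move=> f _ /=; apply/ffunP => i; rewrite ffunE.
by case: unliftP => [j ->|->]; rewrite ?ffunE.
Qed.

Lemma big_ffun0 (V : nmodType) (T : finType) (F : {ffun 'I_0 -> T} -> V) g0 :
  \sum_f F f = F g0.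
Proof.
rewrite (eq_bigr (fun _ => F g0)); last first.
  by move=> g _; congr F; apply/ffunP => -[].
by rewrite sumr_const card_ffun card_ord expn0.
Qed.

Lemma tensf_ext d k (A B : 'I_k -> 'M[C]_d) : A =1 B -> tensf A = tensf B.
Proof.
elim: k A B => [|k IH] A B H //=.
by rewrite H (IH (fun i => A (lift ord0 i)) (fun i => B (lift ord0 i))).
Qed.

Lemma pauli1_complete (a b c e : 'I_2) :
  \sum_(x < 4) pauli C x a b * pauli C x c e = 2 * ((a == e) && (b == c))%:R.
Proof.
rewrite !big_ord_recl big_ord0 !mxE /=.
have hi : 'i * 'i = -1 :> C by exact: mulCii.
case: a => [[|[|?]] ?] //; case: b => [[|[|?]] ?] //;
case: c => [[|[|?]] ?] //; case: e => [[|[|?]] ?] //=;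
rewrite ?mulNr ?mulrN ?hi ?opprK; ring.
Qed.

End B.


Section B2.
Variable C : numClosedFieldType.

Lemma pauli_str_cons n (x : 'I_4) (g : {ffun 'I_n -> 'I_4}) :
  pauli_str C (cons_ffun x g) = castmx (esym (expnS 2 n), esym (expnS 2 n)) (pauli C x *t pauli_str C g).
Proof.
rewrite /pauli_str /= cons_ffun0; congr (castmx _ (_ *t _)).
by apply: tensf_ext => i; rewrite cons_ffunS.
Qed.

Lemma pauli_complete n (a b c e : 'I_(2^n)) :
  \sum_(s : {ffun 'I_n -> 'I_4}) pauli_str C s a b * pauli_str C s c e
    = (2^n)%:R * ((a == e) && (b == c))%:R.
Proof.
elim: n a b c e => [|n IH] a b c e.
  rewrite (big_ffun0 _ [ffun=> ord0]) /pauli_str /= !mxE.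
  have E1 : forall x y : 'I_(2^0), x == y.
    by move=> [[|?] ?] [[|?] ?].
  by rewrite !E1 /= mulr1.
have [a1 [a2 ->]] := index_cast (expnS 2 n) a.
have [b1 [b2 ->]] := index_cast (expnS 2 n) b.
have [c1 [c2 ->]] := index_cast (expnS 2 n) c.
have [e1 [e2 ->]] := index_cast (expnS 2 n) e.
rewrite big_ffunS.
under eq_bigr => x _.
  under eq_bigr => g _ do rewrite pauli_str_cons !castmxE !cast_ordK !tensmxE mulrACA.
  rewrite -mulr_sumr IH; over.
rewrite -mulr_suml pauli1_complete.
rewrite !(inj_eq (@cast_ord_inj _ _ _)) !(inj_eq (can_inj (@mxtens_indexK _ _))) !xpair_eqE.
rewrite expnS natrM mulrACA -natrM; congr (_ * _).
by rewrite -natrM mulnb; case: (a1 == e1); case: (a2 == e2); case: (b1 == c1); case: (b2 == c2).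
Qed.

End B2.


Section B3.
Variable C : numClosedFieldType.
Variable n : nat.
Local Notation d := (2 ^ n)%N.
Local Notation S := {ffun 'I_n -> 'I_4}.
Local Notation sig := (pauli_str C).

Lemma CM (a b : 'I_d) : \sum_(s : S) (sig s a b) *: sig s = d%:R *: delta_mx b a.
Proof.
apply/matrixP => c e; rewrite summxE !mxE.
under eq_bigr do rewrite mxE.
by rewrite pauli_complete [(e == a)]eq_sym [(c == b)]eq_sym andbC.
Qed.

Lemma delta_mulL p q (b : 'I_p) (a : 'I_p) (A : 'M[C]_(p, q)) :
  delta_mx b a *m A = \sum_c A a c *: delta_mx b c.
Proof.
apply/matrixP => x y; rewrite !mxE summxE.
under eq_bigr do rewrite mxE.
under [RHS]eq_bigr do rewrite !mxE.
case: (x =P b) => _ /=.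
  rewrite (bigD1 a) //= big1 => [|z /negbTE -> //]; last by rewrite mul0r.
  rewrite eqxx mul1r addr0 (bigD1 y) //= big1 => [|z]; last by rewrite eq_sym => /negbTE ->; rewrite mulr0.
  by rewrite eqxx mulr1 addr0.
by rewrite !big1 // => z _; rewrite (mul0r, mulr0).
Qed.

Lemma delta_mulR p q (b : 'I_q) (a : 'I_q) (A : 'M[C]_(p, q)) :
  A *m delta_mx b a = \sum_c A c b *: delta_mx c a.
Proof.
apply: trmx_inj; rewrite trmx_mul trmx_delta delta_mulL raddf_sum /=.
by apply: eq_bigr => c _; rewrite linearZ /= trmx_delta mxE.
Qed.

Lemma TC (Y : 'M[C]_d) : \sum_(s : S) \tr (sig s *m Y) *: sig s = d%:R *: Y.
Proof.
have trE : forall s : S, \tr (sig s *m Y) = \sum_a \sum_b Y b a * sig s a b.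
  move=> s; rewrite /mxtrace; apply: eq_bigr => a _; rewrite mxE.
  by apply: eq_bigr => b _; rewrite mulrC.
under eq_bigr do rewrite trE scaler_suml; rewrite exchange_big /=.
under eq_bigr do (under eq_bigr do rewrite scaler_suml; rewrite exchange_big /=).
rewrite [in RHS](matrix_sum_delta Y) scaler_sumr exchange_big /=; apply: eq_bigr => a _.
rewrite scaler_sumr; apply: eq_bigr => b _.
under eq_bigr do rewrite -scalerA; rewrite -scaler_sumr CM.
by rewrite scalerA mulrC -scalerA.
Qed.

Lemma KI1 (E : 'M[C]_d -> 'M[C]_d) (A : 'M[C]_d) : lin_map E ->
  \sum_(s : S) sig s *t E (sig s *m A) = d%:R *: ((A *t 1%:M) *m choi E).
Proof.
move=> HE.
have step1 : \sum_(s : S) sig s *t E (sig s *m A)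
   = \sum_a \sum_b delta_mx a b *t E ((d%:R *: delta_mx b a) *m A).
  transitivity (\sum_(s : S) \sum_a \sum_b delta_mx a b *t (sig s a b *: E (sig s *m A))).
    apply: eq_bigr => s _; rewrite {1}(matrix_sum_delta (sig s)) tensmx_suml.
    apply: eq_bigr => a _; rewrite tensmx_suml; apply: eq_bigr => b _.
    by rewrite tensmxZl tensmxZr.
  rewrite exchange_big; apply: eq_bigr => a _ /=; rewrite exchange_big; apply: eq_bigr => b _ /=.
  rewrite -tensmx_sumr -CM mulmx_suml; congr (_ *t _).
  rewrite (linS HE); apply: eq_bigr => s _; by rewrite -scalemxAl (linZ HE).
rewrite step1 /choi.
transitivity (d%:R *: \sum_b \sum_c \sum_a A a c *: (delta_mx a b *t E (delta_mx b c))).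
  rewrite exchange_big scaler_sumr; apply: eq_bigr => b _ /=.
  rewrite [in RHS]exchange_big /= scaler_sumr; apply: eq_bigr => a _ /=.
  rewrite -scalemxAl (linZ HE) tensmxZr delta_mulL (linS HE) tensmx_sumr; congr (_ *: _).
  by apply: eq_bigr => c _; rewrite (linZ HE) tensmxZr.
congr (_ *: _); rewrite mulmx_sumr; apply: eq_bigr => b _; rewrite mulmx_sumr; apply: eq_bigr => c _.
rewrite trmx_delta tensmx_mul mul1mx delta_mulR tensmx_suml; apply: eq_bigr => a _.
by rewrite tensmxZl.
Qed.

Lemma KI2 (E : 'M[C]_d -> 'M[C]_d) (A : 'M[C]_d) : lin_map E ->
  \sum_(s : S) sig s *t E (A *m sig s) = d%:R *: (choi E *m (A *t 1%:M)).
Proof.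
move=> HE.
have step1 : \sum_(s : S) sig s *t E (A *m sig s)
   = \sum_a \sum_b delta_mx a b *t E (A *m (d%:R *: delta_mx b a)).
  transitivity (\sum_(s : S) \sum_a \sum_b delta_mx a b *t (sig s a b *: E (A *m sig s))).
    apply: eq_bigr => s _; rewrite {1}(matrix_sum_delta (sig s)) tensmx_suml.
    apply: eq_bigr => a _; rewrite tensmx_suml; apply: eq_bigr => b _.
    by rewrite tensmxZl tensmxZr.
  rewrite exchange_big; apply: eq_bigr => a _ /=; rewrite exchange_big; apply: eq_bigr => b _ /=.
  rewrite -tensmx_sumr -CM mulmx_sumr; congr (_ *t _).
  rewrite (linS HE); apply: eq_bigr => s _; by rewrite -scalemxAr (linZ HE).
rewrite step1 /choi.
transitivity (d%:R *: \sum_c \sum_a \sum_b A c b *: (delta_mx a b *t E (delta_mx c a))).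
  rewrite [in RHS]exchange_big /= scaler_sumr; apply: eq_bigr => a _ /=.
  rewrite [in RHS]exchange_big /= scaler_sumr; apply: eq_bigr => b _ /=.
  rewrite -scalemxAr (linZ HE) tensmxZr delta_mulR (linS HE) tensmx_sumr; congr (_ *: _).
  by apply: eq_bigr => c _; rewrite (linZ HE) tensmxZr.
congr (_ *: _); rewrite mulmx_suml; apply: eq_bigr => c _; rewrite mulmx_suml; apply: eq_bigr => a _.
rewrite trmx_delta tensmx_mul mulmx1 delta_mulL tensmx_suml; apply: eq_bigr => b _.
by rewrite tensmxZl.
Qed.

End B3.


Section C.
Variable C : numClosedFieldType.

Definition Jm p (sg X : 'M[C]_p) := 2^-1 *: (sg *m X + X *m sg).

Lemma expand_proj p (sg X : 'M[C]_p) s :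
  (1%:M + s *: sg) *m X *m (1%:M + s *: sg)
   = X + s *: (sg *m X + X *m sg) + (s * s) *: (sg *m X *m sg).
Proof.
rewrite !mulmxDl !mulmxDr !mul1mx !mulmx1 -!scalemxAl -!scalemxAr !scalerA.
apply/matrixP => i j; rewrite !mxE; ring.
Qed.

Lemma sum_sgn_proj p (sg X : 'M[C]_p) :
  \sum_(b : bool) sgn C b *: (proj sg b *m X *m proj sg b) = Jm sg X.
Proof.
rewrite big_bool /proj /sgn /Jm -!scalemxAl -!scalemxAr !expand_proj.
apply/matrixP => i j; rewrite !mxE.
have h2 : (2 : C) != 0 by rewrite pnatr_eq0.
by field.
Qed.

Lemma eq_foldl (T S : Type) (f g : S -> T -> S) x l :
  (forall X a, f X a = g X a) -> foldl f x l = foldl g x l.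
Proof. by move=> H; elim: l x => //= a l IH x; rewrite H IH. Qed.

Lemma foldl_lin p (T : Type) (f : 'M[C]_p -> T -> 'M[C]_p) l :
  (forall a c A B, f (c *: A + B) a = c *: f A a + f B a) ->
  forall c A B, foldl f (c *: A + B) l = c *: foldl f A l + foldl f B l.
Proof. by move=> H; elim: l => //= a l IH c A B; rewrite H IH. Qed.

Lemma foldl_map' (T U S : Type) (f : S -> T -> S) (g : U -> T) x l :
  foldl f x (map g l) = foldl (fun X a => f X (g a)) x l.
Proof. by elim: l x => //= a l IH x. Qed.

Lemma FS_lin p (k : nat) (E : nat -> 'M[C]_p -> 'M[C]_p) (obs : 'I_k -> 'M[C]_p) (s : {ffun 'I_k -> bool}) :
  (forall i : nat, (i.+1 < k)%N -> lin_map (E i)) ->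
  forall c A B, final_state (c *: A + B) E obs s = c *: final_state A E obs s + final_state B E obs s.
Proof.
move=> HE; apply: foldl_lin => a c A B /=.
have -> : (if a == 0 :> nat then c *: A + B else E a.-1 (c *: A + B))
   = c *: (if a == 0 :> nat then A else E a.-1 A) + (if a == 0 :> nat then B else E a.-1 B).
  case: ifP => // /negbT; rewrite -lt0n => Ha; apply: HE.
  by rewrite prednK.
by rewrite mulmxDr mulmxDl -(scalemxAr c) -(scalemxAl c).
Qed.

Lemma FS_ext p k rho (E : nat -> 'M[C]_p -> 'M[C]_p) (obs1 obs2 : 'I_k -> 'M[C]_p) s :
  obs1 =1 obs2 -> final_state rho E obs1 s = final_state rho E obs2 s.
Proof. by move=> H; apply: eq_foldl => X a; rewrite H. Qed.

Lemma FS_1 p rho (E : nat -> 'M[C]_p -> 'M[C]_p) (obs : 'I_1 -> 'M[C]_p) s :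
  final_state rho E obs s = proj (obs ord0) (s ord0) *m rho *m proj (obs ord0) (s ord0).
Proof. by rewrite /final_state enum_ordSl enum_ord0. Qed.

Lemma FS_peel p k rho (E : nat -> 'M[C]_p -> 'M[C]_p) (obs : 'I_k.+2 -> 'M[C]_p) s :
  final_state rho E obs s =
  final_state (E 0%N (proj (obs ord0) (s ord0) *m rho *m proj (obs ord0) (s ord0)))
    (fun i => E i.+1) (fun a => obs (lift ord0 a)) [ffun a => s (lift ord0 a)].
Proof.
rewrite /final_state !enum_ordSl /= !foldl_map' ffunE.
by apply: eq_foldl => X a /=; rewrite !ffunE /bump add0n.
Qed.

Definition Wst p k (rho : 'M[C]_p) (E : nat -> 'M[C]_p -> 'M[C]_p) (obs : 'I_k -> 'M[C]_p) :=
  \sum_(s : {ffun 'I_k -> bool}) (\prod_(a < k) sgn C (s a)) *: final_state rho E obs s.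

Lemma W_lin p (k : nat) (E : nat -> 'M[C]_p -> 'M[C]_p) (obs : 'I_k -> 'M[C]_p) :
  (forall i : nat, (i.+1 < k)%N -> lin_map (E i)) ->
  forall c A B, Wst (c *: A + B) E obs = c *: Wst A E obs + Wst B E obs.
Proof.
move=> HE c A B; rewrite /Wst scaler_sumr -big_split /=; apply: eq_bigr => s _.
by rewrite FS_lin // scalerDr !scalerA mulrC.
Qed.

Lemma W_ext p k rho (E : nat -> 'M[C]_p -> 'M[C]_p) (obs1 obs2 : 'I_k -> 'M[C]_p) :
  obs1 =1 obs2 -> Wst rho E obs1 = Wst rho E obs2.
Proof. by move=> H; apply: eq_bigr => s _; rewrite (FS_ext _ _ _ H). Qed.

Lemma W_1 p rho (E : nat -> 'M[C]_p -> 'M[C]_p) (obs : 'I_1 -> 'M[C]_p) :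
  Wst rho E obs = Jm (obs ord0) rho.
Proof.
rewrite /Wst big_ffunS -sum_sgn_proj; apply: eq_bigr => x _.
rewrite (big_ffun0 _ [ffun=> true]) big_ord_recl big_ord0 mulr1 FS_1 cons_ffun0.
by [].
Qed.

Lemma W_peel p k rho (E : nat -> 'M[C]_p -> 'M[C]_p) (obs : 'I_k.+2 -> 'M[C]_p) :
  (forall i : nat, (i.+1 < k.+2)%N -> lin_map (E i)) ->
  Wst rho E obs = Wst (E 0%N (Jm (obs ord0) rho)) (fun i => E i.+1) (fun a => obs (lift ord0 a)).
Proof.
move=> HE.
have HE' : forall i : nat, (i.+1 < k.+1)%N -> lin_map (E i.+1) by move=> i Hi; apply: HE.
rewrite -sum_sgn_proj (lin_sum (HE 0%N isT)) (lin_sum (W_lin _ HE')).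
rewrite /Wst big_ffunS; apply: eq_bigr => x _.
rewrite scaler_sumr; apply: eq_bigr => g _.
rewrite big_ord_recl cons_ffun0 FS_peel cons_ffun0 -scalerA; congr (_ *: (_ *: _)).
  by apply: eq_bigr => a _; rewrite cons_ffunS.
by congr final_state; apply/ffunP => a; rewrite !ffunE liftK.
Qed.

Section Pdm.
Variable n : nat.
Local Notation d := (2 ^ n)%N.
Local Notation S := {ffun 'I_n -> 'I_4}.
Local Notation sig := (pauli_str C).

Lemma corr_W k rho (E : nat -> 'M[C]_d -> 'M[C]_d) (idx : {ffun 'I_k -> S}) :
  corr rho E idx = \tr (Wst rho E (fun a => sig (idx a))).
Proof. by rewrite /corr /Wst raddf_sum; apply: eq_bigr => s _ /=; rewrite mxtraceZ. Qed.

Lemma corr_1 rho (E : nat -> 'M[C]_d -> 'M[C]_d) (idx : {ffun 'I_1 -> S}) :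
  corr rho E idx = \tr (sig (idx ord0) *m rho).
Proof.
rewrite corr_W W_1 /Jm mxtraceZ mxtraceD [\tr (rho *m _)]mxtrace_mulC.
have h2 : (2 : C) != 0 by rewrite pnatr_eq0.
by field.
Qed.

Lemma corr_peel k rho (E : nat -> 'M[C]_d -> 'M[C]_d) (idx : {ffun 'I_k.+2 -> S}) :
  (forall i : nat, (i.+1 < k.+2)%N -> lin_map (E i)) ->
  corr rho E idx = corr (E 0%N (Jm (sig (idx ord0)) rho)) (fun i => E i.+1) [ffun a => idx (lift ord0 a)].
Proof.
move=> HE; rewrite !corr_W W_peel //; congr mxtrace; apply: W_ext => a.
by rewrite ffunE.
Qed.

Lemma tensf_cons k (F : S -> 'M[C]_d) x (g : {ffun 'I_k -> S}) :
  tensf (fun a => F (cons_ffun x g a)) =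
  castmx (esym (expnS d k), esym (expnS d k)) (F x *t tensf (fun a => F (g a))).
Proof.
rewrite /= cons_ffun0; congr (castmx _ (_ *t _)).
by apply: tensf_ext => a; rewrite cons_ffunS.
Qed.

Lemma pdm_peel k rho (E : nat -> 'M[C]_d -> 'M[C]_d) :
  (forall i : nat, (i.+1 < k.+2)%N -> lin_map (E i)) ->
  pdm k.+2 rho E = (d%:R)^-1 *: \sum_(x : S)
     castmx (esym (expnS d k.+1), esym (expnS d k.+1))
       (sig x *t pdm k.+1 (E 0%N (Jm (sig x) rho)) (fun i => E i.+1)).
Proof.
move=> HE; rewrite /pdm big_ffunS.
have -> : (2 ^ (k.+2 * n))%:R = d%:R * (2 ^ (k.+1 * n))%:R :> C.
  by rewrite -natrM -expnD -mulSn.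
rewrite invfM -scalerA; congr (_ *: _).
rewrite scaler_sumr; apply: eq_bigr => x _.
rewrite tensmxZr castmxZ tensmx_sumr castmx_sum; congr (_ *: _).
apply: eq_bigr => g _.
rewrite (tensf_cons (fun s => sig s)) corr_peel // cons_ffun0 tensmxZr castmxZ.
have -> : [ffun a => cons_ffun x g (lift ord0 a)] = g.
  by apply/ffunP => a; rewrite ffunE cons_ffunS.
by [].
Qed.

Lemma pdm_1 rho (E : nat -> 'M[C]_d -> 'M[C]_d) :
  pdm 1 rho E = castmx (esym (expn1 d), esym (expn1 d)) rho.
Proof.
rewrite /pdm big_ffunS mul1n.
under eq_bigr => x _.
  rewrite (big_ffun0 _ [ffun=> [ffun=> ord0]]) corr_1 cons_ffun0.
  rewrite (tensf_cons (fun s => sig s)) /= tens_mx_scalar scale1r castmx_comp.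
  rewrite (castmx_irr _ (esym (expn1 d)) _ (esym (expn1 d))).
  over.
under eq_bigr do rewrite -castmxZ.
rewrite -castmx_sum -castmxZ; congr castmx.
by rewrite TC scalerA mulVf ?scale1r // pnatr_eq0 expn_eq0.
Qed.

End Pdm.

End C.


Section D.
Variable C : numClosedFieldType.
Variable n : nat.
Local Notation d := (2 ^ n)%N.
Local Notation S := {ffun 'I_n -> 'I_4}.
Local Notation sig := (pauli_str C).

Lemma d_neq0 : (d%:R : C) != 0.
Proof. by rewrite pnatr_eq0 expn_eq0. Qed.

Lemma P1 rho (E : nat -> 'M[C]_d -> 'M[C]_d) : lin_map (E 0%N) ->
  pdm 2 rho E = castmx (expn_sq d, expn_sq d)
      (2^-1 *: ((rho *t 1%:M) *m choi (E 0%N) + choi (E 0%N) *m (rho *t 1%:M))).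
Proof.
move=> HE; rewrite pdm_peel; last by move=> [|i].
under eq_bigr => x _ do rewrite pdm_1 tensmx_castr castmx_comp (castmx_irr _ (expn_sq d) _ (expn_sq d)).
rewrite -castmx_sum -castmxZ; congr castmx.
under eq_bigr do rewrite /Jm (linZ HE) (linD HE) tensmxZr tensmxDr.
rewrite -scaler_sumr big_split /= KI1 // KI2 //.
rewrite -scalerDr !scalerA; congr (_ *: _).
have := d_neq0; have h2 : (2 : C) != 0 by rewrite pnatr_eq0.
move=> hd; by field.
Qed.

Lemma Q0 rho (E : nat -> 'M[C]_d -> 'M[C]_d) : lin_map (E 0%N) ->
  pdm 2 rho E = 2^-1 *: (ext_right (pdm 1 rho E) *m ext_left 0 (choi (E 0%N))
                         + ext_left 0 (choi (E 0%N)) *m ext_right (pdm 1 rho E)).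
Proof.
move=> HE.
have h1 : ext_right (pdm 1 rho E) = castmx (expn_sq d, expn_sq d) (rho *t 1%:M).
  by rewrite /ext_right pdm_1 tensmx_castl castmx_comp; apply: castmx_irr.
have h2 : ext_left 0 (choi (E 0%N)) = castmx (expn_sq d, expn_sq d) (choi (E 0%N)).
  by rewrite /ext_left tens_scalar_mx scale1r castmx_comp; apply: castmx_irr.
by rewrite P1 // h1 h2 -!castmx_mulmx -castmxD -castmxZ.
Qed.

Lemma LA k (sg : 'M[C]_d) (X : 'M[C]_(d ^ k)) :
  castmx (esym (expnS d k.+1), esym (expnS d k.+1)) (sg *t ext_right X)
  = ext_right (castmx (esym (expnS d k), esym (expnS d k)) (sg *t X)).
Proof.
rewrite /ext_right tensmx_castr castmx_comp tensmx_castl castmx_comp tensmxA !castmx_comp.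
exact: castmx_irr.
Qed.

Lemma tensmxA' m1 n1 m2 n2 m3 n3 (A : 'M[C]_(m1, n1)) (B : 'M[C]_(m2, n2)) (D : 'M[C]_(m3, n3)) :
  A *t (B *t D) = castmx (esym (mulnA m1 m2 m3), esym (mulnA n1 n2 n3)) ((A *t B) *t D).
Proof. by rewrite tensmxA castmx_comp castmx_id. Qed.

Lemma LB k (M : 'M[C]_(d * d)) :
  castmx (esym (expnS d k.+2), esym (expnS d k.+2)) ((1%:M : 'M[C]_d) *t ext_left k M)
  = ext_left k.+1 M.
Proof.
rewrite /ext_left tensmx_castr castmx_comp tensmxA' tens11 castmx_comp.
rewrite -(castmx1 C (esym (expnS d k))) tensmx_castl castmx_comp.
exact: castmx_irr.
Qed.

Lemma ext_right_sum k (c : C) (I : finType) (Z : I -> 'M[C]_(d ^ k)) :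
  ext_right (c *: \sum_x Z x) = c *: \sum_x ext_right (Z x).
Proof. by rewrite /ext_right tensmxZl tensmx_suml castmxZ castmx_sum. Qed.

Lemma tens_mulr p (sg : 'M[C]_d) (A B : 'M[C]_p) :
  sg *t (A *m B) = (sg *t A) *m (1%:M *t B).
Proof. by rewrite tensmx_mul mulmx1. Qed.

Lemma tens_mull p (sg : 'M[C]_d) (A B : 'M[C]_p) :
  sg *t (B *m A) = (1%:M *t B) *m (sg *t A).
Proof. by rewrite tensmx_mul mul1mx. Qed.

Definition Qprop j := forall rho (E : nat -> 'M[C]_d -> 'M[C]_d),
  (forall i : nat, (i.+1 < j.+2)%N -> lin_map (E i)) ->
  pdm j.+2 rho E = 2^-1 *: (ext_right (pdm j.+1 rho E) *m ext_left j (choi (E j))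
                         + ext_left j (choi (E j)) *m ext_right (pdm j.+1 rho E)).

Lemma Qall j : Qprop j.
Proof.
elim: j => [|j IH] rho E HE; first by apply: Q0; apply: HE.
have HE1 : forall i : nat, (i.+1 < j.+2)%N -> lin_map (E i).
  by move=> i Hi; apply: HE; apply: (ltn_trans Hi).
have HE' : forall i : nat, (i.+1 < j.+2)%N -> lin_map (E i.+1) by move=> i Hi; apply: HE.
rewrite [LHS](pdm_peel _ HE) (pdm_peel _ HE1).
under eq_bigr => x _ do rewrite (IH _ _ HE') /= tensmxZr tensmxDr tens_mulr tens_mull
   castmxZ castmxD !castmx_mulmx LA LB.
rewrite ext_right_sum -!scalemxAl -!scalemxAr -scalerDr mulmx_suml mulmx_sumr -big_split /=.
rewrite scalerA mulrC -scalerA !scaler_sumr.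
by [].
Qed.

End D.

End Helpers.
Import Helpers.


Theorem theorem2 (C : numClosedFieldType) (n m : nat)
  (rho1 : 'M[C]_(2 ^ n)) (E : nat -> 'M[C]_(2 ^ n) -> 'M[C]_(2 ^ n)) :
  (1 <= n)%N -> (2 <= m)%N ->
  density rho1 ->
  (forall a : nat, (a < m.-1)%N -> cptp (E a)) ->
  pdm 2 rho1 E =
    castmx (expn_sq (2 ^ n), expn_sq (2 ^ n))
      (2^-1 *: ((rho1 *t 1%:M) *m choi (E 0%N) + choi (E 0%N) *m (rho1 *t 1%:M)))
  /\
  (forall j : nat, (j.+3 <= m)%N ->
     pdm j.+3 rho1 E =
       2^-1 *: (ext_right (pdm j.+2 rho1 E) *m ext_left j.+1 (choi (E j.+1))
              + ext_left j.+1 (choi (E j.+1)) *m ext_right (pdm j.+2 rho1 E))).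
Proof.
move=> _ Hm _ HE.
have Hlin : forall a : nat, (a < m.-1)%N -> lin_map (E a).
  by move=> a Ha; case: (HE a Ha).
split.
  by apply: P1; apply: Hlin; lia.
move=> j Hj; apply: (Qall (j := j.+1)) => i Hi; apply: Hlin.
lia.
Qed.
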